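(* Let $h>0$ and let $T^{\rm H}=\left[-\frac{\pi}{2},\frac{3\pi}{2}\right)^2\setminus\left[-\frac{\pi}{2},\frac{\pi}{2}\right)^2$. Let $\widetilde{A}_h(\boldsymbol\theta)=\frac{2}{h^2}(2-\cos\theta_1-\cos\theta_2)$ be the symbol of the 2D 5-point Laplacian stencil $\frac{1}{h^2}\begin{bmatrix} & -1 & \\ -1 & 4 & -1\\ & -1 & \end{bmatrix}$. For $\alpha,\beta,\gamma\in\mathbb R$ let $\Upsilon(\alpha,\beta,\gamma)=h^2\begin{bmatrix}\gamma&\beta&\gamma\\ \beta&\alpha&\beta\\ \gamma&\beta&\gamma\end{bmatrix}$ be the symmetric 9-point stencil with symbol $\widetilde{\Upsilon}(\boldsymbol\theta)=h^2(\alpha+2\beta\cos\theta_1+2\beta\cos\theta_2+4\gamma\cos\theta_1\cos\theta_2)$, and for $\omega\in\mathbb R$ define the smoothing factor $$\mu_{\rm loc}(\alpha,\beta,\gamma,\omega)=\max_{\boldsymbol\theta\in T^{\rm H}}\left|1-\omega\,\widetilde{A}_h(\boldsymbol\theta)\widetilde{\Upsilon}(\boldsymbol\theta)\right|.$$ Then among all symmetric 9-point stencils of the form $\Upsilon(\alpha,\beta,\gamma)$, the SPAI smoother $M_9=\frac{1}{24}\Upsilon(44,10,3)$ gives the optimal smoothing factor: $\min_{\alpha,\beta,\gamma,\omega\in\mathbb R}\mu_{\rm loc}(\alpha,\beta,\gamma,\omega)=\frac{9+8\sqrt{10}}{215}\approx0.1595$, and this minimum is attained for $(\alpha,\beta,\gamma)=(\frac{44}{24},\frac{10}{24},\frac{3}{24})$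 with the optimal relaxation parameter $\omega_{\rm opt}=\frac{309-12\sqrt{10}}{1720}\approx0.1576$.
   Context: This concerns the smoother (relaxation) $u^{k+1}=u^k+\omega M(b-Au^k)$ for the standard 5-point finite difference discretization $A_h$ of $-\Delta$ with mesh size $h$ in 2D, with relaxation error operator $I-\omega MA_h$. Its local Fourier (LFA) smoothing factor is the maximum over the high-frequency set $T^{\rm H}$ (for standard coarsening) of the modulus of the symbol $1-\omega\widetilde{A}_h(\boldsymbol\theta)\widetilde{M}(\boldsymbol\theta)$, where $\widetilde{M}$ is the symbol of the stencil $M$; the optimal smoothing factor is the minimum of this over the free parameters. *)

(* Defs.v *)
From mathcomp Require Import all_boot all_order all_algebra.
From mathcomp Require Import all_classical all_reals all_analysis.
Set Implicit Arguments. Unset Strict Implicit. Unset Printing Implicit Defensive.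
Import Order.TTheory GRing.Theory Num.Theory.
Local Open Scope classical_set_scope.
Local Open Scope ring_scope.

Section Defs.
Variable R : realType.

Definition in_half_open (a b t : R) : Prop := a <= t /\ t < b.

Definition THigh : set (R * R) :=
  [set th | in_half_open (- (pi / 2)) (3 * pi / 2) th.1 /\
            in_half_open (- (pi / 2)) (3 * pi / 2) th.2 /\
            ~ (in_half_open (- (pi / 2)) (pi / 2) th.1 /\
               in_half_open (- (pi / 2)) (pi / 2) th.2)].

Definition symA (h : R) (th : R * R) : R :=
  2 / h ^+ 2 * (2 - cos th.1 - cos th.2).

Definition symUps (h a b g : R) (th : R * R) : R :=
  h ^+ 2 * (a + 2 * b * cos th.1 + 2 * b * cos th.2 + 4 * g * cos th.1 * cos th.2).

Definition mu_loc (h a b g w : R) : R :=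
  sup [set `|1 - w * symA h th * symUps h a b g th| | th in THigh].

End Defs.

(* Main.v *)
Require Import Defs.
From mathcomp Require Import all_boot all_order all_algebra.
From mathcomp Require Import all_classical all_reals all_analysis.
From mathcomp Require Import ring lra.
Import Order.TTheory GRing.Theory Num.Theory.
Local Open Scope classical_set_scope.
Local Open Scope ring_scope.

Set Implicit Arguments.
Section Helpers.
Context {R : realType}.
Lemma P1 (x y : R) : -1 <= x <= 1 -> -1 <= y <= 0 ->
  16 <= (2 - x - y) * (11 + 5*x + 5*y + 3*x*y).
Proof.
move=> /andP[x1 x2] /andP[y1 y2].
have h1 : 0 <= (1 - x) * (1 + x) by apply: mulr_ge0; lra.
have h2 : 0 <= (1 - y) * (1 + y) * (1 - x) by apply: mulr_ge0; [apply: mulr_ge0|]; lra.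
have h3 : 0 <= (- y) * (1 + y) * (1 + x) by apply: mulr_ge0; [apply: mulr_ge0|]; lra.
have h4 : 0 <= (5 + 3 * y) * ((1 - x) * (1 + x)) by apply: mulr_ge0; lra.
nra.
Qed.

Lemma P2 (x y ts : R) : -1 <= x <= 1 -> -1 <= y <= 1 ->
  9 * ts ^+ 2 - 32 * ts + 24 = 0 -> 1 <= ts <= 11/10 ->
  (2 - x - y) * (11 + 5*x + 5*y + 3*x*y) <= 3 * ((-160 * ts + 768) / 81).
Proof.
move=> /andP[x1 x2] /andP[y1 y2] E /andP[t1 t2].
set s : R := x + y.
have hF : (2 - x - y) * (11 + 5*x + 5*y + 3*x*y) <= (2 - s) * (11 + 5 * s + 3 * (s^+2/4)).
  have : 0 <= (2 - s) * (3 * ((x - y)^+2 / 4)) by apply: mulr_ge0; [rewrite /s; lra| apply: mulr_ge0 => //; apply: divr_ge0 => //; exact: sqr_ge0].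
  rewrite /s; nra.
set t : R := 1 - s / 2.
have tb : 0 <= t <= 2 by rewrite /t /s; apply/andP; split; lra.
have e1 : (2 - s) * (11 + 5 * s + 3 * (s^+2/4)) = 3 * (16 * t - 32 * t^+2 / 3 + 2 * t^+3).
  by rewrite /t /s; field.
have e2 : 16 * ts - 32 * ts^+2 / 3 + 2 * ts^+3 = (-160 * ts + 768) / 81.
  apply/eqP; rewrite -subr_eq0; apply/eqP.
  have -> : 16 * ts - 32 * ts^+2 / 3 + 2 * ts^+3 - (-160 * ts + 768) / 81
    = (2 * ts / 9 - 32/81) * (9 * ts ^+ 2 - 32 * ts + 24) by field.
  by rewrite E mulr0.
have e3 : (16 * ts - 32 * ts^+2 / 3 + 2 * ts^+3) - (16 * t - 32 * t^+2 / 3 + 2 * t^+3)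
   = (t - ts)^+2 * (32/3 - 4 * ts - 2 * t) + 2/3 * (ts - t) * (9 * ts ^+ 2 - 32 * ts + 24).
  by field.
rewrite E mulr0 addr0 in e3.
have : 0 <= (t - ts)^+2 * (32/3 - 4 * ts - 2 * t).
  apply: mulr_ge0; [exact: sqr_ge0|]; move/andP: tb => [tb1 tb2]; lra.
rewrite -e3 e2 => H.
rewrite -e2 in H *.
lra.
Qed.

Lemma P1' (x y : R) : -1 <= x <= 1 -> -1 <= y <= 1 -> (x <= 0 \/ y <= 0) ->
  16 <= (2 - x - y) * (11 + 5*x + 5*y + 3*x*y).
Proof.
move=> /andP[x1 x2] /andP[y1 y2] [hx|hy].
- have := @P1 y x; rewrite y1 y2 x1 hx => /(_ isT isT).
  have -> : (2 - y - x) * (11 + 5 * y + 5 * x + 3 * y * x) =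
            (2 - x - y) * (11 + 5 * x + 5 * y + 3 * x * y) by ring.
  by [].
- by apply: P1; apply/andP; split.
Qed.

Definition fv (a b g w c1 c2 : R) : R :=
  1 - w * (2 * (2 - c1 - c2) * (a + 2 * b * c1 + 2 * b * c2 + 4 * g * c1 * c2)).

Lemma prodE (h a b g w : R) th : 0 < h ->
  1 - w * symA h th * symUps h a b g th = fv a b g w (cos th.1) (cos th.2).
Proof.
move=> hp; rewrite /symA /symUps /fv; field.
by rewrite gt_eqF.
Qed.

Lemma cos_nonpos (t : R) : pi / 2 <= t -> t < 3 * pi / 2 -> cos t <= 0.
Proof.
move=> t1 t2.
have -> : t = (t - pi) + pi by rewrite subrK.
rewrite cosDpi oppr_le0; apply: cos_ge0_pihalf; apply/andP; split; lra.
Qed.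

Lemma THigh_cos th : @THigh R th -> cos th.1 <= 0 \/ cos th.2 <= 0.
Proof.
case=> [[a1 a2] [[b1 b2] hn]].
case: (ltP th.1 (pi / 2)) => h1.
- right; apply: cos_nonpos => //.
  case: (ltP th.2 (pi / 2)) => h2 //.
  by exfalso; apply: hn; split; split.
- by left; apply: cos_nonpos.
Qed.

Lemma absP (a b g c1 c2 : R) : `|c1| <= 1 -> `|c2| <= 1 ->
  `|a + 2 * b * c1 + 2 * b * c2 + 4 * g * c1 * c2| <= `|a| + 2 * `|b| + 2 * `|b| + 4 * `|g|.
Proof.
move=> h1 h2.
have e1 : `|2 * b * c1| <= 2 * `|b|.
  rewrite !normrM normr_nat; apply: ler_piMr => //; by rewrite mulr_ge0.
have e2 : `|2 * b * c2| <= 2 * `|b|.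
  rewrite !normrM normr_nat; apply: ler_piMr => //; by rewrite mulr_ge0.
have e3 : `|4 * g * c1 * c2| <= 4 * `|g|.
  rewrite !normrM normr_nat.
  apply: (@le_trans _ _ (4 * `|g| * `|c1|)).
    by apply: ler_piMr => //; rewrite !mulr_ge0.
  by apply: ler_piMr => //; rewrite !mulr_ge0.
have := ler_normD (a + 2 * b * c1 + 2 * b * c2) (4 * g * c1 * c2).
have := ler_normD (a + 2 * b * c1) (2 * b * c2).
have := ler_normD a (2 * b * c1).
lra.
Qed.

Lemma mem_THigh (x y : R) : -(pi/2) <= x -> x < 3*pi/2 -> -(pi/2) <= y -> y < 3*pi/2 ->
  (pi/2 <= x \/ pi/2 <= y) -> @THigh R (x, y).
Proof.
move=> x1 x2 y1 y2 hd; split; [by split|split; [by split|]].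
move=> [[_ h1] [_ h2]]; rewrite /= in h1 h2; case: hd => ?; lra.
Qed.

Lemma bounded (h a b g w : R) : 0 < h ->
  has_sup [set `|1 - w * symA h th * symUps h a b g th| | th in @THigh R].
Proof.
move=> hp; split.
  exists `|1 - w * symA h (pi, pi) * symUps h a b g (pi, pi)|; exists (pi, pi) => //.
  have := pi_gt0 R => hpi.
  by apply: mem_THigh; lra.
exists (1 + `|w| * (8 * (`|a| + 2 * `|b| + 2 * `|b| + 4 * `|g|))).
move=> _ [th _ <-]; rewrite prodE // /fv.
have c1 : `|cos th.1| <= 1 by rewrite ler_norml cos_le1 cos_geN1.
have c2 : `|cos th.2| <= 1 by rewrite ler_norml cos_le1 cos_geN1.
apply: (le_trans (ler_normB _ _)); rewrite normr1 lerD2l normrM.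
apply: ler_wpM2l => //; rewrite normrM.
apply: ler_pM => //; last exact: absP.
have := cos_le1 th.1; have := cos_le1 th.2; have := cos_geN1 th.1; have := cos_geN1 th.2.
move=> *; rewrite ger0_norm; lra.
Qed.

Lemma LB (u a b g w m : R) : 9 * u ^+ 2 - 32 * u + 24 = 0 -> 1 <= u <= 11/10 ->
  `|fv a b g w (-1) (-1)| <= m -> `|fv a b g w 1 0| <= m ->
  `|fv a b g w 1 (-1)| <= m -> `|fv a b g w (1 - u) (1 - u)| <= m ->
  (-10 * u + 48) / 27 - 1 <= ((-10 * u + 48) / 27 + 1) * m.
Proof.
move=> E /andP[u1 u2].
rewrite !ler_norml => /andP[_ h1] /andP[_ h2] /andP[_ h3] /andP[h4 _].
have l1 : 0 <= u ^+ 3 / 8 by apply: divr_ge0 => //; apply: exprn_ge0; lra.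
have l2 : 0 <= u * (u - 2) ^+ 2 by apply: mulr_ge0; [lra| exact: sqr_ge0].
have l3 : 0 <= u * (3 * u / 2 - 1) * (1 - u / 2) by apply: mulr_ge0; [apply: mulr_ge0|]; lra.
have k1 := ler_wpM2l l1 h1.
have k2 := ler_wpM2l l2 h2.
have k3 := ler_wpM2l l3 h3.
have id1 : u ^+ 3 / 8 * fv a b g w (-1) (-1) + u * (u - 2) ^+ 2 * fv a b g w 1 0
   + u * (3 * u / 2 - 1) * (1 - u / 2) * fv a b g w 1 (-1) - fv a b g w (1 - u) (1 - u)
   = u ^+ 3 / 8 + u * (u - 2) ^+ 2 + u * (3 * u / 2 - 1) * (1 - u / 2) - 1.
  by rewrite /fv; field.
have id2 : u ^+ 3 / 8 + u * (u - 2) ^+ 2 + u * (3 * u / 2 - 1) * (1 - u / 2)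
   = (-10 * u + 48) / 27 + (u / 24 - 2 / 27) * (9 * u ^+ 2 - 32 * u + 24).
  by field.
rewrite E mulr0 addr0 in id2.
rewrite -id2.
lra.
Qed.

End Helpers.


Theorem theorem3p1 (R : realType) (h : R) (hpos : 0 < h) :
  (forall a b g w : R,
      (9 + 8 * Num.sqrt 10) / 215 <= mu_loc h a b g w) /\
  mu_loc h (44 / 24) (10 / 24) (3 / 24) ((309 - 12 * Num.sqrt 10) / 1720)
    = (9 + 8 * Num.sqrt 10) / 215.
Proof.
set r := Num.sqrt (10 : R).
have r2 : r ^+ 2 = 10 by rewrite /r sqr_sqrtr.
have r0 : 0 <= r by rewrite /r sqrtr_ge0.
have rlo : 3 <= r by nra.
have rhi : r <= 7 / 2 by nra.
have hpi := pi_gt0 R.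
set u : R := (16 - 2 * r) / 9.
have uE : 9 * u ^+ 2 - 32 * u + 24 = 0 by rewrite /u; nra.
have ub : 1 <= u <= 11/10 by rewrite /u; apply/andP; split; nra.
have cb : -1 <= 1 - u <= 1 by rewrite /u; apply/andP; split; lra.
have cneg : 1 - u < 0 by rewrite /u; nra.
set t4 := acos (1 - u).
have ct4 : cos t4 = 1 - u by rewrite /t4 acosK // in_itv /=.
have t4hi : t4 <= pi by rewrite /t4 acos_lepi.
have t4lo : pi / 2 <= t4.
  case: (ltP t4 (pi / 2)) => // hlt.
  have : 0 < cos t4.
    apply: cos_gt0_pihalf; apply/andP; split => //.
    have := acos_ge0 cb; rewrite -/t4; lra.
  lra.
split.
  move=> a b g w.
  set m := mu_loc h a b g w.
  have hs := @bounded R h a b g w hpos.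
  have ub' := sup_upper_bound hs.
  have key : forall th, @THigh R th -> `|fv a b g w (cos th.1) (cos th.2)| <= m.
    by move=> th hth; rewrite -(prodE h) //; apply: ub'; exists th.
  have k1 := key (pi, pi).
  have k2 := key (0, pi / 2).
  have k3 := key (0, pi).
  have k4 := key (t4, t4).
  rewrite /= cospi cos0 cos_pihalf in k1 k2 k3; rewrite /= ct4 in k4.
  have H := @LB R _ _ _ _ _ _ uE ub
    (k1 ltac:(apply: mem_THigh; lra))
    (k2 ltac:(apply: mem_THigh; lra))
    (k3 ltac:(apply: mem_THigh; lra))
    (k4 ltac:(apply: mem_THigh; lra)).
  move: H; rewrite /u => H.
  have hp : 0 < 515 + 20 * r by lra.
  nra.
set w := (309 - 12 * r) / 1720.
have hs := @bounded R h (44 / 24) (10 / 24) (3 / 24) w hpos.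
apply/eqP; rewrite eq_le; apply/andP; split.
  apply: ge_sup; first by case: hs.
  move=> _ [th hth <-]; rewrite prodE // /fv.
  have := @THigh_cos R _ hth => hd.
  have x1 := cos_le1 th.1; have x2 := cos_geN1 th.1.
  have y1 := cos_le1 th.2; have y2 := cos_geN1 th.2.
  set x := cos th.1 in hd x1 x2 *; set y := cos th.2 in hd y1 y2 *.
  have G1 := @P1' R x y ltac:(apply/andP; split; lra) ltac:(apply/andP; split; lra) hd.
  have G2 := @P2 R x y u ltac:(apply/andP; split; lra) ltac:(apply/andP; split; lra) uE ub.
  have w0 : 0 <= w by rewrite /w; lra.
  have W1 := ler_wpM2l w0 G1.
  have W2 := ler_wpM2l w0 G2.
  have -> : 2 * (2 - x - y) * (44 / 24 + 2 * (10 / 24) * x + 2 * (10 / 24) * y + 4 * (3 / 24) * x * y)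
    = (2 - x - y) * (11 + 5 * x + 5 * y + 3 * x * y) / 3 by field.
  rewrite ler_norml; apply/andP; split.
    move: W2; rewrite /w /u; nra.
  move: W1; rewrite /w; lra.
apply: sup_upper_bound => //.
exists (pi, pi).
  by apply: mem_THigh; lra.
rewrite prodE //= /fv cospi.
rewrite ger0_norm /w; first by field.
lra.
Qed.
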